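(* Let $\Omega$ be finite, $\mathcal P$ the probability functions on $\Omega$, $M$ finite, and $s:\mathcal P\to[-\infty,M]^\Omega$ a proper scoring rule on $\mathcal P$ with $E_p s(p)$ finite for all $p\in\mathcal P$. Let $F=s[\mathcal P]\cap\mathbb R^\Omega$ be the set of finite scores. Suppose that for every convergent sequence $(p_n)$ in $\hat{\mathcal P}$ with $s(p_n)\in F$ for all $n$, we have $\lim_n\langle p_n,s(p_n)\rangle=\langle p,s(p)\rangle$, where $p=\lim_n p_n$. Then $\sigma_F(p)=\langle p,s(p)\rangle$ for all $p\in\hat{\mathcal P}$.
   Context: $\hat{\mathcal P}$ is the set of functions $q:\Omega\to[0,1]$ with $\sum_\omega q(\omega)=1$ (identified with probabilities via $q(\omega)=p(\{\omega\})$), with the Euclidean topology; for $q\in\hat{\mathcal P}$, $s(q)$ means $s$ of the corresponding probability. $\langle f,g\rangle=\sum_\omega f(\omega)\cdot g(\omega)$ for $f\in[0,1]^\Omega$ (or $f\in\mathbb R^\Omega$ when $g$ finite), $g\in[-\infty,\infty)^\Omega$, with the convention $a\cdot0=0\cdot a=0$ for all extended reals $a$; thus $E_p g=\langle\hat p,g\rangle$. $s$ is proper if $E_p s(p)\ge E_p s(q)$ for all probabilities $p,q$. For $F\subseteq\mathbb R^\Omega$ and $v$, $\sigma_F(v)=\sup_{z\in F}\langle v,z\rangle$. *)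

(* Defs.v *)
From HB Require Import structures.
From mathcomp Require Import all_boot all_order all_algebra.
From mathcomp Require Import all_classical all_reals all_analysis.
Set Implicit Arguments. Unset Strict Implicit. Unset Printing Implicit Defensive.
Import Order.TTheory GRing.Theory Num.Theory.
Import numFieldNormedType.Exports.
Local Open Scope ring_scope.
Local Open Scope classical_set_scope.
Local Open Scope ereal_scope.

Section Defs.
Variables (R : realType) (Omega : finType).

Definition is_prob (q : Omega -> R) : Prop :=
  (forall w, (0 <= q w)%R) /\ (\sum_(w : Omega) q w)%R = 1%R.

(* <f, g> = sum_w f w * g w, with the convention 0 * (-oo) = 0
   (which is mathcomp-analysis' ereal multiplication convention) *)
Definition ip (f : Omega -> R) (g : Omega -> \bar R) : \bar R :=
  \sum_(w : Omega) ((f w)%:E * g w).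

Definition proper_score (s : (Omega -> R) -> Omega -> \bar R) : Prop :=
  forall p q, is_prob p -> is_prob q -> ip p (s q) <= ip p (s p).

Definition finite_scores (s : (Omega -> R) -> Omega -> \bar R) : set (Omega -> R) :=
  [set z | exists q, is_prob q /\ s q = (fun w => (z w)%:E)].

Definition support_fun (F : set (Omega -> R)) (v : Omega -> R) : \bar R :=
  ereal_sup [set ip v (fun w => (z w)%:E) | z in F].

End Defs.

(* Main.v *)
Require Import Defs.
From HB Require Import structures.
From mathcomp Require Import all_boot all_order all_algebra.
From mathcomp Require Import all_classical all_reals all_analysis.
From mathcomp Require Import ring lra.
Import Order.TTheory GRing.Theory Num.Theory.
Import numFieldNormedType.Exports.
Local Open Scope ring_scope.
Local Open Scope classical_set_scope.
Local Open Scope ereal_scope.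

Theorem lemma2 (R : realType) (Omega : finType) (M : R)
    (s : (Omega -> R) -> Omega -> \bar R)
    (hM : forall p, is_prob p -> forall w, s p w <= M%:E)
    (hproper : proper_score s)
    (hfin : forall p, is_prob p -> ip p (s p) \is a fin_num)
    (hcont : forall (pn : nat -> Omega -> R) (p : Omega -> R),
        (forall n, is_prob (pn n)) ->
        (forall w, (fun n => pn n w) @ \oo --> p w) ->
        (forall n, exists2 z, finite_scores s z & s (pn n) = (fun w => (z w)%:E)) ->
        (fun n => ip (pn n) (s (pn n))) @ \oo --> ip p (s p)) :
  forall p : Omega -> R, is_prob p -> support_fun (finite_scores s) p = ip p (s p).
Proof.
move=> p pp.
have := hfin p pp; rewrite fin_numE => /andP[/eqP hN /eqP hP].
move Et: (ip p (s p)) => T; rewrite Et in hN hP.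
case: T Et hN hP => // t Et _ _.
have ub : support_fun (finite_scores s) p <= t%:E.
  apply: ge_ereal_sup => _ [z [q [qp Eq]] <-].
  by rewrite -Et -Eq; apply: hproper.
have cardpos : (0 < #|Omega|)%N.
  case: pp => _ E; rewrite lt0n; apply/eqP => /card0_eq h.
  by move: E; rewrite big_pred0 // => /eqP; rewrite eq_sym oner_eq0.
set u : R := ((#|Omega|%:R)^-1)%R.
have u0 : (0 < u)%R by rewrite invr_gt0 ltr0n.
have su : (\sum_(w : Omega) u = 1)%R.
  by rewrite sumr_const -mulr_natr cardE -cardE mulVf // pnatr_eq0 -lt0n.
set e : nat -> R := fun n => ((n.+1%:R)^-1)%R.
have e0 : forall n, (0 < e n)%R by move=> n; rewrite invr_gt0 ltr0n.
have e1 : forall n, (e n <= 1)%R by move=> n; rewrite invf_le1 // ?ler1n // ltr0n.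
set pn := fun n w => ((1 - e n) * p w + e n * u)%R.
have pn0 : forall n w, (0 < pn n w)%R.
  move=> n w; apply: ltr_pwDr; first by rewrite mulr_gt0.
  by apply: mulr_ge0; [rewrite subr_ge0 | case: pp].
have pnp : forall n, is_prob (pn n).
  move=> n; split; first by move=> w; apply: ltW.
  rewrite /pn big_split /= -!mulr_sumr su; case: pp => _ ->; ring.
have fin : forall n w, s (pn n) w = (fine (s (pn n) w))%:E.
  move=> n w; case E: (s (pn n) w) => [r| |] //.
    by have := hM _ (pnp n) w; rewrite E.
  have := hfin _ (pnp n); rewrite fin_numE => /andP[/eqP []].
  apply/eqP; rewrite /ip esum_eqNy; apply/existsP; exists w.
  by rewrite E mulrNy gtr0_sg ?pn0 // mul1e.
set z := fun n w => fine (s (pn n) w).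
have Ez : forall n, s (pn n) = fun w => (z n w)%:E.
  by move=> n; apply: funext => w; exact: fin n w.
have ipE : forall q n, ip q (s (pn n)) = (\sum_w q w * z n w)%:E.
  by move=> q n; rewrite Ez /ip -sumEFin; apply: eq_bigr => w _; rewrite EFinM.
have lb : forall n, (\sum_w p w * z n w)%:E <= support_fun (finite_scores s) p.
  move=> n; apply: ereal_sup_ubound; exists (z n).
    by exists (pn n); split; [exact: pnp | exact: Ez].
  by rewrite /ip -sumEFin; apply: eq_bigr => w _; rewrite EFinM.
have he : e n @[n --> \oo] --> 0%R := cvg_harmonic.
have hw : forall w, pn n w @[n --> \oo] --> p w.
  move=> w; rewrite [X in _ --> X](_ : p w = (1 - 0) * p w + 0 * u)%R; last by ring.
  apply: cvgD; apply: cvgM => //; try apply: cvg_cst.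
  by apply: cvgB => //; apply: cvg_cst.
have hex : forall n, exists2 z0, finite_scores s z0 & s (pn n) = (fun w => (z0 w)%:E).
  move=> n; exists (z n); last exact: Ez.
  by exists (pn n); split; [exact: pnp | exact: Ez].
have hlim : (\sum_w pn n w * z n w)%R @[n --> \oo] --> t.
  have := hcont pn p pnp hw hex; rewrite Et => /fine_cvg.
  have -> // : fine \o (fun n => ip (pn n) (s (pn n))) = fun n => (\sum_w pn n w * z n w)%R.
  by apply: funext => n /=; rewrite ipE.
have hB : forall n, (\sum_w u * z n w <= M)%R.
  move=> n; apply: (@le_trans _ _ (\sum_w u * M)%R).
    apply: ler_sum => w _; apply: ler_wpM2l; first exact: ltW.
    by rewrite -lee_fin -fin; apply: hM.
  by rewrite -mulr_suml su mul1r.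
have ha : forall n, (\sum_w pn n w * z n w =
   (1 - e n) * (\sum_w p w * z n w) + e n * (\sum_w u * z n w))%R.
  move=> n; rewrite !mulr_sumr -big_split /=; apply: eq_bigr => w _; rewrite /pn; ring.
move: ub lb; case: (support_fun _ _) => [r| |] //; last first.
  by move=> _ /(_ 0%N); rewrite leeNy_eq.
move=> ub lb; apply/eqP; rewrite eq_le ub /= lee_fin.
have hr : ((1 - e n) * r + e n * M)%R @[n --> \oo] --> r.
  rewrite [X in _ --> X](_ : r = (1 - 0) * r + 0 * M)%R; last by ring.
  apply: cvgD; apply: cvgM => //; try apply: cvg_cst.
  by apply: cvgB => //; apply: cvg_cst.
rewrite -(cvg_lim _ hlim) // -(cvg_lim _ hr) //.
apply: ler_lim; [by apply/cvg_ex; exists t | by apply/cvg_ex; exists r |].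
near=> n; rewrite ha; apply: lerD.
  by apply: ler_wpM2l; [rewrite subr_ge0 | rewrite -lee_fin].
by apply: ler_wpM2l; [exact: ltW | exact: hB].
Unshelve. all: by end_near.
Qed.
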